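(* Let $f\in\mathbb{Z}_2[x]$, $n\ge2$, and let $\sigma=(x_1,\dots,x_k)$ be a growing $k$-cycle of $f_n$, with representatives $x_i\in\mathbb{Z}_2$. Put $a_n(x)=(f^k)'(x)$, $b_n(x)=(f^k(x)-x)/2^n$, $a_{n+1}(x)=(f^{2k})'(x)$, $b_{n+1}(x)=(f^{2k}(x)-x)/2^{n+1}$. Then for all $1\le i\le k$ and $t\in\{0,1\}$, $$a_{n+1}(x_i)\equiv1\pmod4,\qquad 2\,b_{n+1}(x_i+2^nt)\equiv b_n(x_i)\big(1+a_n(x_i)\big)\pmod4.$$
   Context: $f_n$ is the induced map on $\mathbb{Z}/2^n\mathbb{Z}$, $f_n(x\bmod 2^n)=f(x)\bmod 2^n$. A $k$-cycle of $f_n$ is a tuple of distinct elements $x_1,\dots,x_k$ with $f_n(x_i)=x_{i+1}$, $f_n(x_k)=x_1$; it grows if $\{y\in\mathbb{Z}/2^{n+1}\mathbb{Z}:y\bmod 2^n\in\sigma\}$ is a single cycle of $f_{n+1}$, of length $2k$. *)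

(* Defs.v *)
From HB Require Import structures.
From mathcomp Require Import all_boot all_order all_algebra.
From mathcomp Require Import boolp.
Set Implicit Arguments. Unset Strict Implicit. Unset Printing Implicit Defensive.
Import Order.TTheory GRing.Theory Num.Theory.
Local Open Scope ring_scope.

(* The ring Z_2 of 2-adic integers, as the inverse limit of Z/2^n Z:         *)
(* an element is a sequence of integers (z2 x n) in [0, 2^n) with            *)
(* z2 x n = z2 x n.+1 mod 2^n.                                              *)

Definition pw2 (n : nat) : int := 2 ^+ n.

Record Z2 := MkZ2 {
  z2 : nat -> int;
  z2_coh : forall n, z2 n = modz (z2 n.+1) (pw2 n) }.

Lemma z2_eq (x y : Z2) : (forall n, z2 x n = z2 y n) -> x = y.
Proof.
case: x y => [x hx] [y hy] /= h.
have e : x = y by apply: funext.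
subst y; congr MkZ2; exact: Prop_irrelevance.
Qed.

Lemma pw2_modS (m : int) n : modz (modz m (pw2 n.+1)) (pw2 n) = modz m (pw2 n).
Proof.
rewrite [in RHS](divz_eq m (pw2 n.+1)) /pw2 exprS mulrA.
by rewrite modzMDl.
Qed.

Lemma z2_norm (x : Z2) n : modz (z2 x n) (pw2 n) = z2 x n.
Proof. by rewrite [z2 x n]z2_coh modz_mod. Qed.

Definition precoh (t : nat -> int) :=
  forall n, modz (t n.+1) (pw2 n) = modz (t n) (pw2 n).

Definition mkZ2 (t : nat -> int) (ht : precoh t) : Z2.
Proof.
refine (@MkZ2 (fun n => modz (t n) (pw2 n)) _).
by move=> n; rewrite pw2_modS ht.
Defined.

Lemma z2_precoh (x : Z2) : precoh (z2 x).
Proof. by move=> n; rewrite z2_norm -z2_coh. Qed.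

Lemma precoh_cst c : precoh (fun _ => c).
Proof. by []. Qed.

Lemma precoh_add (x y : Z2) : precoh (fun n => z2 x n + z2 y n).
Proof.
move=> n; rewrite -modzDm (z2_precoh x) (z2_precoh y).
by rewrite modzDm.
Qed.

Lemma precoh_mul (x y : Z2) : precoh (fun n => z2 x n * z2 y n).
Proof.
move=> n; rewrite -modzMm (z2_precoh x) (z2_precoh y).
by rewrite modzMm.
Qed.

Lemma precoh_opp (x : Z2) : precoh (fun n => - z2 x n).
Proof.
move=> n; rewrite -modzNm (z2_precoh x).
by rewrite modzNm.
Qed.

Definition z2zero : Z2 := mkZ2 (precoh_cst 0).
Definition z2one : Z2 := mkZ2 (precoh_cst 1).
Definition z2add (x y : Z2) : Z2 := mkZ2 (precoh_add x y).
Definition z2mul (x y : Z2) : Z2 := mkZ2 (precoh_mul x y).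
Definition z2opp (x : Z2) : Z2 := mkZ2 (precoh_opp x).

HB.instance Definition _ := gen_eqMixin Z2.
HB.instance Definition _ := gen_choiceMixin Z2.

Lemma z2addA : associative z2add.
Proof.
move=> x y z; apply: z2_eq => n /=.
by rewrite modzDml modzDmr addrA.
Qed.

Lemma z2addC : commutative z2add.
Proof. by move=> x y; apply: z2_eq => n /=; rewrite addrC. Qed.

Lemma z2add0 : left_id z2zero z2add.
Proof. by move=> x; apply: z2_eq => n /=; rewrite modzDml add0r z2_norm. Qed.

Lemma z2addN : left_inverse z2zero z2opp z2add.
Proof. by move=> x; apply: z2_eq => n /=; rewrite modzDml addNr. Qed.

HB.instance Definition _ := GRing.isZmodule.Build Z2 z2addA z2addC z2add0 z2addN.

Lemma z2mulA : associative z2mul.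
Proof.
move=> x y z; apply: z2_eq => n /=.
by rewrite modzMml modzMmr mulrA.
Qed.

Lemma z2mulC : commutative z2mul.
Proof. by move=> x y; apply: z2_eq => n /=; rewrite mulrC. Qed.

Lemma z2mul1 : left_id z2one z2mul.
Proof. by move=> x; apply: z2_eq => n /=; rewrite modzMml mul1r z2_norm. Qed.

Lemma z2mulDl : left_distributive z2mul z2add.
Proof.
move=> x y z; apply: z2_eq => n /=.
by rewrite modzMml modzDm mulrDl.
Qed.

Lemma z2one_neq0 : z2one != z2zero.
Proof.
apply/eqP => h; have := congr1 (fun u => z2 u 1) h.
by rewrite /= /pw2.
Qed.

HB.instance Definition _ :=
  GRing.Zmodule_isComNzRing.Build Z2 z2mulA z2mulC z2mul1 z2mulDl z2one_neq0.

Definition eqm (m : nat) (u v : Z2) : Prop := exists c : Z2, u - v = 2 ^+ m * c.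

Definition fiter (k : nat) (f : {poly Z2}) : {poly Z2} :=
  iter k (fun g => f \Po g) 'X.

Definition is_cycle (m : nat) (f : {poly Z2}) (x : nat -> Z2) (k : nat) : Prop :=
  (0 < k)%N /\
  (forall i j, (i < k)%N -> (j < k)%N -> eqm m (x i) (x j) -> i = j) /\
  (forall i, (i < k)%N -> eqm m f.[x i] (x ((i.+1 %% k)%N))).

(* The k-cycle of f_n represented by x grows: the set of residues
   y mod 2^(n+1) with y mod 2^n in the cycle is a single cycle of f_(n+1)
   of length 2k. *)
Definition grows (n : nat) (f : {poly Z2}) (x : nat -> Z2) (k : nat) : Prop :=
  exists y : nat -> Z2,
    is_cycle n.+1 f y (k.*2) /\
    (forall z : Z2, (exists2 i, (i < k)%N & eqm n z (x i)) <->
                    (exists2 j, (j < k.*2)%N & eqm n.+1 z (y j))).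

(* Main.v *)
Require Import Defs.
From HB Require Import structures.
From mathcomp Require Import all_boot all_order all_algebra.
From mathcomp Require Import ring lra zify.
Import Order.TTheory GRing.Theory Num.Theory.
Set Implicit Arguments. Unset Strict Implicit.
Local Open Scope ring_scope.

Lemma pw2_gt0 n : 0 < pw2 n.
Proof. by rewrite /pw2 exprn_gt0. Qed.
Lemma pw2_neq0 n : pw2 n != 0.
Proof. by rewrite gt_eqF // pw2_gt0. Qed.
Lemma pw2S n : pw2 n.+1 = 2 * pw2 n.
Proof. by rewrite /pw2 exprS. Qed.

Lemma z2D (u v : Z2) n : z2 (u + v) n = modz (z2 u n + z2 v n) (pw2 n).
Proof. by []. Qed.
Lemma z2M (u v : Z2) n : z2 (u * v) n = modz (z2 u n * z2 v n) (pw2 n).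
Proof. by []. Qed.
Lemma z2N (u : Z2) n : z2 (- u) n = modz (- z2 u n) (pw2 n).
Proof. by []. Qed.
Lemma z2_1 n : z2 (1 : Z2) n = modz 1 (pw2 n).
Proof. by []. Qed.
Lemma z2_0 n : z2 (0 : Z2) n = 0.
Proof. by rewrite /= mod0z. Qed.
Lemma z2_at0 (u : Z2) : z2 u 0 = 0.
Proof. by rewrite -z2_norm /pw2 expr0 modz1. Qed.
Lemma two_Z2 : (2 : Z2) = 1 + 1.
Proof. by []. Qed.

Lemma modzM2 (a : int) n : modz (2 * a) (pw2 n.+1) = 2 * modz a (pw2 n).
Proof.
rewrite {1}(divz_eq a (pw2 n)) pw2S mulrDr mulrCA modzMDl modz_small //.
have h1 := modz_ge0 a (pw2_neq0 n).
have h2 := ltz_mod a (pw2_neq0 n).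
rewrite gtr0_norm ?pw2_gt0 // in h2.
move: h1 h2; generalize (pw2 n) => P; generalize (modz a P) => r h1 h2; lia.
Qed.

Lemma z2_two (n : nat) : z2 (2 : Z2) n.+1 = modz 2 (pw2 n.+1).
Proof.
rewrite two_Z2 z2D z2_1 (@modz_small 1) //.
rewrite pw2S; have := pw2_gt0 n; generalize (pw2 n) => P h; lia.
Qed.

Lemma z2_two_mul (c : Z2) n : z2 (2 * c) n.+1 = 2 * z2 c n.
Proof.
rewrite z2M z2_two modzMml modzM2 -z2_coh //.
Qed.

Lemma two_reg0 (w : Z2) : 2 * w = 0 -> w = 0.
Proof.
move=> h; apply: z2_eq => n.
have e : z2 (2*w) n.+1 = z2 0 n.+1 by rewrite h.
move: e; rewrite z2_two_mul !z2_0 => e; lia.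
Qed.

Lemma two_inj (u v : Z2) : 2 * u = 2 * v -> u = v.
Proof.
move=> h; apply/eqP; rewrite -subr_eq0; apply/eqP/two_reg0.
by rewrite mulrBr h subrr.
Qed.

Lemma pow2_inj m (u v : Z2) : 2 ^+ m * u = 2 ^+ m * v -> u = v.
Proof.
elim: m u v => [|m IH] u v; first by rewrite !expr0 !mul1r.
rewrite exprS -!mulrA => /two_inj; exact: IH.
Qed.

Lemma z2_mod2 (w : Z2) n : modz (z2 w n.+1) 2 = z2 w 1.
Proof.
elim: n => [|n IH]; first by rewrite -[2]/(pw2 1) z2_norm.
rewrite -IH [z2 w n.+1]z2_coh.
have gen : forall m P : int, modz m 2 = modz (modz m (2 * P)) 2.
  move=> m P; rewrite {1}(divz_eq m (2 * P)).
  by rewrite (mulrCA (m %/ (2 * P))%Z) (mulrC 2) modzMDl.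
by rewrite pw2S -gen.
Qed.

Lemma half_ex (w : Z2) : z2 w 1 = 0 -> exists c, w = 2 * c.
Proof.
move=> h1.
have ev : forall n, z2 w n.+1 = 2 * (z2 w n.+1 %/ 2)%Z.
  move=> n; rewrite mulrC divzK //; apply/dvdz_mod0P; by rewrite z2_mod2.
have pc : precoh (fun n => (z2 w n.+1 %/ 2)%Z).
  move=> n /=.
  have e : z2 w n.+1 = 2 * modz (z2 w n.+2 %/ 2)%Z (pw2 n).
    by rewrite z2_coh {1}(ev n.+1) modzM2.
  by rewrite e mulKz // modz_mod.
exists (mkZ2 pc); apply: z2_eq => -[|n]; first by rewrite !z2_at0.
rewrite z2_two_mul /= -modzM2 -ev; by rewrite z2_norm.
Qed.

Lemma parity (u : Z2) : exists c, u = 2 * c \/ u = 1 + 2 * c.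
Proof.
have r0 : 0 <= z2 u 1 by rewrite -z2_norm modz_ge0 // pw2_neq0.
have r1 : z2 u 1 < 2.
  have := ltz_mod (z2 u 1) (pw2_neq0 1); rewrite z2_norm. by [].
have [e|e] : z2 u 1 = 0 \/ z2 u 1 = 1 by lia.
  by have [c ->] := half_ex e; exists c; left.
have : z2 (u - 1) 1 = 0 by rewrite z2D z2N z2_1 e.
move=> /half_ex [c hc]; exists c; right; by rewrite -hc addrC subrK.
Qed.

Lemma neg1_not_even (c : Z2) : - 1 <> 2 * c.
Proof.
move=> h; have e : z2 (-1) 1 = z2 (2 * c) 1 by rewrite h.
by move: e; rewrite z2_two_mul z2_at0.
Qed.

Lemma eqm_refl m u : eqm m u u.
Proof. by exists 0; rewrite subrr mulr0. Qed.
Lemma eqm_sym m u v : eqm m u v -> eqm m v u.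
Proof. by move=> [c h]; exists (- c); rewrite mulrN -h opprB. Qed.
Lemma eqm_trans m u v w : eqm m u v -> eqm m v w -> eqm m u w.
Proof.
move=> [c h] [d h']; exists (c + d).
by rewrite mulrDr -h -h' addrA subrK.
Qed.

Lemma taylor (p : {poly Z2}) (x h : Z2) :
  exists q, p.[x + h] = p.[x] + h * p^`().[x] + h ^+ 2 * q.
Proof.
elim/poly_ind: p => [|p c [q IH]].
  by exists 0; rewrite deriv0 !horner0; ring.
exists (p^`().[x] + q * (x + h)).
rewrite derivMXaddC !hornerMXaddC hornerD hornerMX IH; ring.
Qed.

Lemma eqm_poly m (p : {poly Z2}) u v : eqm m u v -> eqm m p.[u] p.[v].
Proof.
move=> [c hc].
have [q hq] := taylor p v (u - v).
exists (c * (p^`().[v] + (u - v) * q)).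
rewrite addrC subrK in hq.
by rewrite hq hc; ring.
Qed.

Lemma fiterS k f : fiter k.+1 f = f \Po fiter k f.
Proof. by []. Qed.

Lemma fiterD a b f : fiter (a + b) f = fiter a f \Po fiter b f.
Proof.
elim: a => [|a IH]; first by rewrite add0n /= comp_polyX.
by rewrite addSn !fiterS IH comp_polyA.
Qed.

Lemma cyc_iter M f y K : is_cycle M f y K ->
  forall m j, (j < K)%N -> eqm M (fiter m f).[y j] (y ((j + m) %% K)%N).
Proof.
move=> [K0 [_ cy]] m j jK; elim: m => [|m IH].
  by rewrite addn0 modn_small //= hornerX; exact: eqm_refl.
rewrite fiterS horner_comp.
apply: eqm_trans (eqm_poly f IH) _.
have := cy _ (ltn_pmod (j + m) K0).
by rewrite -addn1 modnDml addn1 addnS.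
Qed.

Lemma shift_inj k j j' : (j < k.*2)%N -> (j' < k.*2)%N ->
  ((j + k) %% k.*2)%N = ((j' + k) %% k.*2)%N -> j = j'.
Proof.
move=> hj hj' e.
have := congr1 (fun z => ((z + k) %% k.*2)%N) e => /=.
rewrite !modnDml -!addnA addnn !modnDr !modn_small //.
Qed.

Unset Implicit Arguments.

Theorem lemma3p4 (f : {poly Z2}) (n k : nat) (x : nat -> Z2) :
  (2 <= n)%N ->
  is_cycle n f x k ->
  grows n f x k ->
  forall i : nat, (i < k)%N ->
    eqm 2 ((fiter (k.*2) f)^`()).[x i] 1 /\
    (forall (t : bool) (bn bn1 : Z2),
       2 ^+ n * bn = (fiter k f).[x i] - x i ->
       2 ^+ n.+1 * bn1 = (fiter (k.*2) f).[x i + 2 ^+ n *+ t]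
                         - (x i + 2 ^+ n *+ t) ->
       eqm 2 (2 * bn1) (bn * (1 + ((fiter k f)^`()).[x i]))).
Proof.
move=> hn cx [y [cy hlift]] i ik.
have k0 : (0 < k)%N by case: cx.
have k20 : (0 < k.*2)%N by rewrite double_gt0.
have fD : fiter k.*2 f = fiter k f \Po fiter k f by rewrite -addnn fiterD.
rewrite fD.
set g := fiter k f.
set a := g^`().[x i].
have gx : eqm n g.[x i] (x i).
  have := cyc_iter cx k ik; by rewrite modnDr modn_small.
have [j jk hj] : exists2 j, (j < k.*2)%N & eqm n.+1 (x i) (y j).
  apply/(hlift (x i)).1; exists i => //; exact: eqm_refl.
have [j' jk' hj'] : exists2 j, (j < k.*2)%N & eqm n.+1 (x i + 2 ^+ n) (y j).
  apply/(hlift (x i + 2 ^+ n)).1; exists i => //.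
  by exists 1; rewrite addrC addKr mulr1.
have yit : forall j, (j < k.*2)%N -> eqm n.+1 g.[y j] (y ((j + k) %% k.*2)%N).
  move=> l hl; have := cyc_iter cy k hl; by [].
have [m em] : exists m, n = m.+2 by exists (n - 2)%N; lia.
have [c0 ha] : exists c, a = 1 + 2 * c.
  have [c [ha|ha]] := parity a; last by exists c.
  exfalso.
  have [q hq] := taylor g (x i) (2 ^+ n).
  have e1 : eqm n.+1 g.[x i] g.[x i + 2 ^+ n].
    exists (- (c + 2 ^+ m.+1 * q)).
    rewrite hq -/a ha em; rewrite !exprS; ring.
  have e2 : eqm n.+1 (y ((j + k) %% k.*2)%N) (y ((j' + k) %% k.*2)%N).
    apply: eqm_trans (eqm_sym (yit j jk)) _.
    apply: eqm_trans (eqm_poly g (eqm_sym hj)) _.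
    apply: eqm_trans e1 _.
    apply: eqm_trans (eqm_poly g hj') _.
    exact: yit.
  have ejj : j = j'.
    apply: (shift_inj jk jk').
    case: cy => _ [dy _]; apply: dy e2; exact: ltn_pmod.
  subst j'.
  have [d hd] := eqm_trans hj (eqm_sym hj').
  apply: (@neg1_not_even d); apply: (@pow2_inj n).
  have -> : 2 ^+ n * -1 = x i - (x i + 2 ^+ n) by ring.
  rewrite hd exprS; ring.
split.
  rewrite deriv_comp hornerM horner_comp -/a.
  have [d hd] := gx.
  have [e he] := eqm_poly (g^`()) gx.
  exists (c0 + c0 ^+ 2 + 2 ^+ m * e * (1 + 2 * c0)).
  have -> : (g^`()).[g.[x i]] = a + 2 ^+ n * e by rewrite -he -/a addrC subrK.
  rewrite ha em !exprS; ring.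
move=> t bn bn1 Hb Hb1.
rewrite -[2 ^+ n *+ t]mulr_natr in Hb1.
set T : Z2 := (t%:R) in Hb1.
set h := 2 ^+ n * T in Hb1.
set yv := x i + h in Hb1.
rewrite horner_comp in Hb1.
have [q1 e_gy] := taylor g (x i) h.
rewrite -/yv -/a in e_gy.
set GY := g.[yv] in e_gy Hb1.
have [q2 e_ggy] := taylor g yv (GY - yv).
have eyy : yv + (GY - yv) = GY by rewrite addrC subrK.
rewrite eyy -/GY in e_ggy.
have hy : eqm n yv (x i) by exists T; rewrite /yv addrC addKr.
have [e3 e_a'] := eqm_poly (g^`()) hy.
have e_a : (g^`()).[yv] = a + 2 ^+ n * e3 by rewrite -e_a' -/a addrC subrK.
have e_gx : g.[x i] = x i + 2 ^+ n * bn by rewrite Hb addrC subrK.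
set E := bn + T * (a - 1) + 2 ^+ n * T ^+ 2 * q1.
have key : 2 * bn1 = E * (1 + a + 2 ^+ n * e3) + 2 ^+ n * E ^+ 2 * q2.
  apply: (@pow2_inj n).
  rewrite mulrA (mulrC (2 ^+ n)) -exprS Hb1 e_ggy e_a e_gy e_gx /yv /h /E.
  ring.
rewrite key /E ha em.
exists (T * c0 * (1 + c0) + 2 ^+ m * (T ^+ 2 * q1 * (1 + (1 + 2 * c0))
        + E * e3 + E ^+ 2 * q2)).
rewrite /E ha em !exprS; ring.
Qed.
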